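(* Let $n\ge2$, $p\ge1$, $B\ge1$, $k\in\{1,\dots,p\}$, and consider $\hat S^{\mathrm{CPSS}}_{n,\tau}$ and $p_{k,\lfloor n/2\rfloor}$ as described in the context. (i) If $\tau\in(\frac12,1]$, then $\mathbb{P}(k\in\hat S^{\mathrm{CPSS}}_{n,\tau})\le\frac{1}{2\tau-1}p_{k,\lfloor n/2\rfloor}^2$. (ii) If $\tau\in[0,\frac12)$, then $\mathbb{P}(k\notin\hat S^{\mathrm{CPSS}}_{n,\tau})\le\frac{1}{1-2\tau}(1-p_{k,\lfloor n/2\rfloor})^2$.
   Context: Let $Z_1,\dots,Z_n$ be i.i.d. random elements. A variable selection procedure is a family of statistics $\hat S_m=\hat S_m(Z_1,\dots,Z_m)$, $m\ge1$, taking values in the subsets of $\{1,\dots,p\}$. For $A=\{i_1<\dots<i_{|A|}\}\subseteq\{1,\dots,n\}$ write $\hat S(A):=\hat S_{|A|}(Z_{i_1},\dots,Z_{i_{|A|}})$, and let $p_{k,m}:=\mathbb{P}(k\in\hat S_m(Z_1,\dots,Z_m))$. Let $\{(A_{2j-1},A_{2j}):j=1,\dots,B\}$ be randomly chosen pairs of subsets of $\{1,\dots,n\}$ of size $\lfloor n/2\rfloor$ with $A_{2j-1}\cap A_{2j}=\emptyset$, the pairs independent of each other and of the data. Define $\hat\Pi_B(k):=\frac1{2B}\sum_{j=1}^{2B}\mathbb{1}_{\{k\in\hat S(A_j)\}}$ and $\hat S^{\mathrm{CPSS}}_{n,\tau}:=\{k:\hat\Pi_B(k)\ge\tau\}$.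 *)

(* Defs.v *)
From HB Require Import structures.
From mathcomp Require Import all_boot all_order all_algebra.
From mathcomp Require Import all_classical all_reals all_analysis.
Set Implicit Arguments. Unset Strict Implicit. Unset Printing Implicit Defensive.
Import Order.TTheory GRing.Theory Num.Theory.
Local Open Scope classical_set_scope.
Local Open Scope ring_scope.

Definition cylinders (I : Type) d (T : measurableType d) : set (set (I -> T)) :=
  [set C | exists i (B : set T), measurable B /\ C = (fun f => f i) @^-1` B].

Definition prod_measurable (I : Type) d (T : measurableType d) (D : set (I -> T)) :
  Prop := <<s @cylinders I d T >> D.

(* A variable selection procedure: S m maps a sample of size m,
   (Z_1,...,Z_m) represented as a function 'I_m -> T, to a subset of
   {1..p} (represented 0-based as {set 'I_p}). *)
Definition selection d (T : measurableType d) (p : nat) :=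
  forall m : nat, ('I_m -> T) -> {set 'I_p}.

(* S_hat(A) = S_{|A|}(Z_{i_1},...,Z_{i_{|A|}}) with i_1 < ... < i_{|A|}
   (enum_val enumerates A in increasing order). *)
Definition S_hat d (T : measurableType d) (Omega : Type) (p n : nat)
  (S : selection T p) (Z : nat -> Omega -> T) (A : {set 'I_n}) (w : Omega)
  : {set 'I_p} :=
  S #|A| (fun j : 'I_#|A| => Z (nat_of_ord (enum_val j)) w).

Definition p_km d (T : measurableType d) d0 (Omega : measurableType d0)
  (R : realType) (P : probability Omega R) (p : nat) (S : selection T p)
  (Z : nat -> Omega -> T) (k : 'I_p) (m : nat) : R :=
  fine (P [set w | k \in S m (fun i : 'I_m => Z (nat_of_ord i) w)]).

(* Pi_hat_B(k) = (1/(2B)) sum_{j=1}^{2B} 1{k \in S_hat(A_j)}, where the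
   j-th pair (A_{2j-1}, A_{2j}) is Apair j. *)
Definition Pi_hat d (T : measurableType d) (Omega : Type) (R : realType)
  (p n B : nat) (S : selection T p) (Z : nat -> Omega -> T)
  (Apair : 'I_B -> Omega -> {set 'I_n} * {set 'I_n}) (k : 'I_p) (w : Omega) : R :=
  (2 * B%:R)^-1 * \sum_(j < B)
     (((k \in S_hat S Z (Apair j w).1 w) : nat)%:R
      + ((k \in S_hat S Z (Apair j w).2 w) : nat)%:R).

Definition S_cpss d (T : measurableType d) (Omega : Type) (R : realType)
  (p n B : nat) (S : selection T p) (Z : nat -> Omega -> T)
  (Apair : 'I_B -> Omega -> {set 'I_n} * {set 'I_n}) (tau : R) (w : Omega)
  : {set 'I_p} :=
  [set k | tau <= Pi_hat R S Z Apair k w].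

(* Main.v *)
Require Import Defs.
From HB Require Import structures.
From mathcomp Require Import all_boot all_order all_algebra.
From mathcomp Require Import all_classical all_reals all_analysis.
From mathcomp Require Import measurable_realfun lra.
Import Order.TTheory GRing.Theory Num.Theory.
Local Open Scope classical_set_scope.
Local Open Scope ring_scope.

Definition rects {d} (T : measurableType d) (m : nat) : set (set ('I_m -> T)) :=
  [set X | exists B : 'I_m -> set T, (forall i, measurable (B i)) /\
     X = [set f | forall i, B i (f i)]].
Notation MT T m := (g_sigma_algebraType (rects T m)).

Lemma markov_fin (R : realType) d0 (Omega : measurableType d0) (P : probability Omega R)
  (B : nat) (W : 'I_B -> set Omega) (C : set Omega) (c : R) :
  (forall j, measurable (W j)) -> measurable C -> 0 <= c ->
  (forall w, C w -> c <= \sum_(j < B) (\1_(W j) w : R)) ->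
  (c%:E * P C <= \big[adde/0%E]_(j < B) P (W j))%E.
Proof.
move=> mW mC c0 H.
have e1 : P C = (\int[P]_(x in setT) (\1_C x : R)%:E)%E.
  by rewrite integral_indic // setIT.
have e2 : \big[adde/0%E]_(j < B) P (W j) =
    (\int[P]_(x in setT) (\sum_(j < B) (\1_(W j) x : R)%:E))%E.
  rewrite ge0_integral_sum.
  - by apply: eq_bigr => j _; rewrite integral_indic // setIT.
  - exact: measurableT.
  - move=> j; apply/measurable_EFinP; exact: measurable_indic.
  - by move=> j x _; rewrite lee_fin indicE; case: (x \in W j).
rewrite e1 e2 -ge0_integralZl //; last first.
  apply/measurable_EFinP; exact: measurable_indic.
apply: ge0_le_integral => //.
- by move=> x _; rewrite mule_ge0 // lee_fin indicE; case: (x \in C).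
- apply: measurable_funeM; apply/measurable_EFinP; exact: measurable_indic.
- apply: emeasurable_sum => j; apply/measurable_EFinP; exact: measurable_indic.
- move=> x _; rewrite sumEFin -EFinM lee_fin indicE.
  case: (boolP (x \in C)) => [/set_mem xC|_]; first by rewrite mulr1; exact: H.
  rewrite mulr0; apply: sumr_ge0 => j _; rewrite indicE; case: (x \in W j) => /=; [exact: ler01 | exact: lexx].
Qed.

Section Main.
Context (R : realType) (d0 : measure_display) (Omega : measurableType d0)
  (P : probability Omega R) (d : measure_display) (T : measurableType d)
  (n : nat) (Z : nat -> Omega -> T).
Hypothesis hZmeas : forall i : 'I_n, measurable_fun setT (Z i).
Hypothesis hZind : forall Bs : 'I_n -> set T, (forall i, measurable (Bs i)) ->
     P (\bigcap_(i in [set: 'I_n]) (Z i @^-1` Bs i))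
       = (\prod_(i < n) P (Z i @^-1` Bs i))%E.
Hypothesis hZid : forall (i j : 'I_n) (Bs : set T), measurable Bs ->
     P (Z i @^-1` Bs) = P (Z j @^-1` Bs).

Definition vec m (g : 'I_m -> 'I_n) (w : Omega) : 'I_m -> T := fun j => Z (g j) w.
Definition ev m (g : 'I_m -> 'I_n) (X : set ('I_m -> T)) : set Omega :=
  @vec m g @^-1` X.
Arguments vec {m} g w.
Arguments ev {m} g X.

Lemma Zmeas (i : 'I_n) B : measurable B -> measurable (Z i @^-1` B).
Proof. by move=> mB; rewrite -[X in measurable X]setTI; apply: hZmeas. Qed.

Lemma vec_meas m g : measurable_fun setT (vec g : Omega -> MT T m).
Proof.
apply: (@measurability _ _ Omega (MT T m) setT (vec g) (rects T m)) => //.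
move=> _ [_ [B [mB ->]] <-].
rewrite (_ : _ `&` _ = \bigcap_(i in [set: 'I_m]) (Z (g i) @^-1` B i)).
  apply: fin_bigcap_measurable; first exact: finite_finset.
  by move=> i _; exact: Zmeas.
by apply/seteqP; split=> w /=; [move=> [_ H] i _; exact: H | move=> H; split=> // i; exact: H].
Qed.

Lemma ev_meas m g X : <<s rects T m>> X -> measurable (@ev m g X).
Proof.
move=> hX; have := @vec_meas m g measurableT X hX.
by rewrite setTI.
Qed.

Definition bx m (g : 'I_m -> 'I_n) (B : 'I_m -> set T) (i : 'I_n) : set T :=
  if [pick j | g j == i] is Some j then B j else setT.
Arguments bx {m} g B i.

Lemma bx_meas m g B : (forall j, measurable (B j)) -> forall i, measurable (@bx m g B i).
Proof. by move=> mB i; rewrite /bx; case: pickP. Qed.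

Lemma bx_g m g B (ginj : injective g) j : @bx m g B (g j) = B j.
Proof.
rewrite /bx; case: pickP => [j' /eqP/ginj -> //|/(_ j)]; by rewrite eqxx.
Qed.

Lemma bx_nog m g B i : (forall j, g j != i) -> @bx m g B i = setT.
Proof. by move=> H; rewrite /bx; case: pickP => // j; rewrite (negbTE (H j)). Qed.

Lemma ev_rect m g (ginj : injective g) B :
  @ev m g [set f | forall j, B j (f j)] =
  \bigcap_(i in [set: 'I_n]) (Z i @^-1` bx g B i).
Proof.
apply/seteqP; split=> w /=.
- move=> H i _; rewrite /bx; case: pickP => // j /eqP <-; exact: H.
- by move=> H j; have := H (g j) I; rewrite /= bx_g.
Qed.

Lemma prod_bx m g (ginj : injective g) B :
  (\prod_(i < n) P (Z i @^-1` @bx m g B i))%E =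
  (\prod_(j < m) P (Z (g j) @^-1` B j))%E.
Proof.
rewrite (bigID (fun i => i \in (g @: [set: 'I_m])%SET)) /=.
rewrite [X in (_ * X)%E]big1 ?mule1; last first.
  move=> i hi; rewrite bx_nog ?preimage_setT ?probability_setT //.
  move=> j; apply/eqP => gji; move/negP: hi; apply; rewrite -gji; exact: imset_f.
rewrite big_imset /=; last by move=> x y _ _; exact: ginj.
by apply: eq_big => [j|j _]; [by rewrite !inE | rewrite bx_g].
Qed.

Lemma P_rect m g (ginj : injective g) B : (forall j, measurable (B j)) ->
  P (@ev m g [set f | forall j, B j (f j)]) = (\prod_(j < m) P (Z (g j) @^-1` B j))%E.
Proof.
move=> mB; rewrite ev_rect // hZind ?prod_bx //; exact: bx_meas.
Qed.

Lemma rectsI m : setI_closed (rects T m).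
Proof.
move=> _ _ [B1 [mB1 ->]] [B2 [mB2 ->]]; exists (fun i => B1 i `&` B2 i); split.
  by move=> i; exact: measurableI.
by apply/seteqP; split=> f /=; [move=> [H1 H2] i; split|move=> H; split=> i; case: (H i)].
Qed.

Lemma ev_setT m g : @ev m g setT = setT.
Proof. by apply/seteqP; split. Qed.

Lemma ev_triv m g (F : (set ('I_m -> T))^nat) : trivIset setT F ->
  trivIset setT (fun k => @ev m g (F k)).
Proof.
move=> tF; apply/trivIsetP => i j _ _ ij; rewrite /ev -preimage_setI.
by move/trivIsetP: tF => /(_ i j I I ij) ->; rewrite preimage_set0.
Qed.

Lemma L_eqdist m g g' (ginj : injective g) (ginj' : injective g') X :
  <<s rects T m>> X -> P (@ev m g X) = P (@ev m g' X).
Proof.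
move=> hX.
apply: (@dynkin_induction _ (MT T m) (rects T m)
   (fun X => P (@ev m g X) = P (@ev m g' X))) => //.
- exact: rectsI.
- move=> _ [B [mB ->]]; rewrite (@P_rect _ _ ginj _ mB) (@P_rect _ _ ginj' _ mB).
  apply: eq_bigr => j _; apply: hZid; exact: (mB j).
- move=> S mS H.
  have e1 : P (ev g (~` S)) = (1 - P (ev g S))%E := probability_setC P (@ev_meas _ g _ mS).
  have e2 : P (ev g' (~` S)) = (1 - P (ev g' S))%E := probability_setC P (@ev_meas _ g' _ mS).
  rewrite e1 e2 H; reflexivity.
- move=> F mF tF H.
  have e1 : P (ev g (\bigcup_k F k)) = (\sum_(k <oo | k \in [set: nat]) P (ev g (F k)))%E :=
    measure_bigcup P _ _ (fun i (_ : [set: nat] i) => @ev_meas _ g _ (mF i)) (@ev_triv _ g F tF).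
  have e2 : P (ev g' (\bigcup_k F k)) = (\sum_(k <oo | k \in [set: nat]) P (ev g' (F k)))%E :=
    measure_bigcup P _ _ (fun i (_ : [set: nat] i) => @ev_meas _ g' _ (mF i)) (@ev_triv _ g' F tF).
  rewrite e1 e2; apply: eq_eseriesr => i _; exact: H.
Qed.

Lemma PE {X : set Omega} : measurable X -> P X = (fine (P X))%:E.
Proof. by move=> mX; rewrite fineK // fin_num_measure. Qed.

Lemma arith1 (a b : R) : ((1 - a%:E) * b%:E = b%:E - a%:E * b%:E)%E.
Proof. by rewrite -EFinB -!EFinM -EFinB mulrBl mul1r. Qed.

Lemma indep_extend m g (E : set Omega) (mE : measurable E) :
  (forall B, (forall j, measurable (B j)) ->
     P (@ev m g [set f | forall j, B j (f j)] `&` E) =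
     (P (@ev m g [set f | forall j, B j (f j)]) * P E)%E) ->
  forall X, <<s rects T m>> X -> P (@ev m g X `&` E) = (P (@ev m g X) * P E)%E.
Proof.
move=> hR X hX.
apply: (@dynkin_induction _ (MT T m) (rects T m)
   (fun X => P (@ev m g X `&` E) = (P (@ev m g X) * P E)%E)) => //.
- exact: rectsI.
- change (P (setT `&` E) = (P setT * P E)%E).
  rewrite setTI probability_setT mul1e; reflexivity.
- move=> _ [B [mB ->]]; exact: hR.
- move=> S mS H.
  have mS' := @ev_meas m g S mS.
  change (P (~` ev g S `&` E) = (P (~` ev g S) * P E)%E).
  have e1 : P (E `\` ev g S) = (P E - P (E `&` ev g S))%E.
    apply: measureD => //; rewrite ltey_eq fin_num_measure //.
  rewrite setIC -setDE e1 probability_setC // setIC H.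
  rewrite (PE mE) (PE mS') arith1; reflexivity.
- move=> F mF tF H.
  change (P ((\bigcup_k ev g (F k)) `&` E) = (P (\bigcup_k ev g (F k)) * P E)%E).
  rewrite setI_bigcupl.
  have e1 : P (\bigcup_(k in [set: nat]) (ev g (F k) `&` E)) =
      (\sum_(k <oo | k \in [set: nat]) P (ev g (F k) `&` E))%E.
    apply: measure_bigcup.
      move=> i _; apply: measurableI; [exact: (@ev_meas _ g _ (mF i)) | exact: mE].
    apply/trivIsetP => i j _ _ ij.
    move/trivIsetP: (@ev_triv _ g F tF) => /(_ i j I I ij) h.
    rewrite setIACA h set0I; reflexivity.
  have e2 : P (\bigcup_(k in [set: nat]) ev g (F k)) =
      (\sum_(k <oo | k \in [set: nat]) P (ev g (F k)))%E :=
    measure_bigcup P _ _ (fun i (_ : [set: nat] i) => @ev_meas _ g _ (mF i)) (@ev_triv _ g F tF).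
  rewrite e1 e2.
  transitivity (\sum_(k <oo | k \in [set: nat]) ((fine (P E))%:E * P (ev g (F k))))%E.
    apply: eq_eseriesr => i _; rewrite H (PE mE) muleC; reflexivity.
  rewrite nneseriesZl; last by move=> i _; exact: measure_ge0.
  rewrite muleC -(PE mE); reflexivity.
Qed.

Lemma rect_sigma m B : (forall j, measurable (B j)) ->
  <<s rects T m>> [set f : 'I_m -> T | forall j, B j (f j)].
Proof. by move=> mB; apply: sub_sigma_algebra; exists B. Qed.

Lemma rect_rect m1 m2 g1 g2 (inj1 : injective g1) (inj2 : injective g2)
  (disj : forall a b, g1 a != g2 b) B1 B2 :
  (forall j, measurable (B1 j)) -> (forall j, measurable (B2 j)) ->
  P (@ev m1 g1 [set f | forall j, B1 j (f j)] `&` @ev m2 g2 [set f | forall j, B2 j (f j)])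
  = (P (@ev m1 g1 [set f | forall j, B1 j (f j)]) * P (@ev m2 g2 [set f | forall j, B2 j (f j)]))%E.
Proof.
move=> mB1 mB2.
rewrite (@ev_rect _ _ inj1 B1) (@ev_rect _ _ inj2 B2).
rewrite (_ : _ `&` _ = \bigcap_(i in [set: 'I_n]) (Z i @^-1` (bx g1 B1 i `&` bx g2 B2 i))); last first.
  apply/seteqP; split=> w /=.
    by move=> [H1 H2] i _; split; [exact: H1|exact: H2].
  by move=> H; split=> i _; case: (H i I).
rewrite !hZind; last 3 first.
- exact: bx_meas.
- exact: bx_meas.
- by move=> i; apply: measurableI; exact: bx_meas.
rewrite -big_split /=; apply: eq_bigr => i _.
case: (pickP (fun j => g1 j == i)) => [j /eqP gji | nog1].
  have -> : bx g2 B2 i = setT.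
    apply: bx_nog => j'; rewrite -gji eq_sym; exact: disj.
  by rewrite setIT preimage_setT probability_setT mule1.
have -> : bx g1 B1 i = setT by apply: bx_nog => j'; rewrite nog1.
by rewrite setTI preimage_setT probability_setT mul1e.
Qed.

Lemma L_indep m1 m2 g1 g2 (inj1 : injective g1) (inj2 : injective g2)
  (disj : forall a b, g1 a != g2 b) X1 X2 :
  <<s rects T m1>> X1 -> <<s rects T m2>> X2 ->
  P (@ev m1 g1 X1 `&` @ev m2 g2 X2) = (P (@ev m1 g1 X1) * P (@ev m2 g2 X2))%E.
Proof.
move=> h1 h2.
have st1 : forall B2, (forall j, measurable (B2 j)) -> forall Y, <<s rects T m1>> Y ->
    P (@ev m1 g1 Y `&` @ev m2 g2 [set f | forall j, B2 j (f j)]) =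
    (P (@ev m1 g1 Y) * P (@ev m2 g2 [set f | forall j, B2 j (f j)]))%E.
  move=> B2 mB2.
  apply: (@indep_extend _ g1 _ (@ev_meas _ g2 _ (@rect_sigma _ _ mB2))).
  move=> B1 mB1; exact: rect_rect.
rewrite setIC muleC.
apply: (@indep_extend _ g2 _ (@ev_meas _ g1 _ h1)) => //.
move=> B2 mB2; rewrite setIC muleC; exact: st1.
Qed.

Lemma prod_sub_rects m X : prod_measurable X -> <<s rects T m>> X.
Proof.
move=> hX; apply: (smallest_sub (@smallest_sigma_algebra _ setT (rects T m))) hX.
move=> _ [i [B [mB ->]]]; apply: sub_sigma_algebra.
exists (fun j => if j == i then B else setT); split.
  by move=> j; case: (j == i).
apply/seteqP; split=> f /=.
  by move=> Hf j; case: eqP => [->|].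
by move=> H; have := H i; rewrite eqxx.
Qed.

Lemma reidx_meas m (g : 'I_m -> 'I_n) (X : set ('I_m -> T)) : prod_measurable X ->
  prod_measurable [set z : 'I_n -> T | X (fun j => z (g j))].
Proof.
move=> hX.
have sa := @sigma_algebra_image _ _ setT (fun z : 'I_n -> T => fun j => z (g j)) _
  (@smallest_sigma_algebra _ setT (@cylinders 'I_n d T)).
have : image_set_system setT (fun z : 'I_n -> T => fun j => z (g j))
   (<<s @cylinders 'I_n d T >>) X.
  apply: (smallest_sub sa) hX.
  move=> _ [i [B [mB ->]]]; rewrite /image_set_system /= setTI.
  by apply: sub_sigma_algebra; exists (g i), B; split.
by rewrite /image_set_system /= setTI.
Qed.

Variables (p B : nat) (S : selection T p).
Hypothesis hS : forall (m : nat) (k : 'I_p), prod_measurable [set f | k \in S m f].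
Variable Apair : 'I_B -> Omega -> {set 'I_n} * {set 'I_n}.
Hypothesis hAmeas : forall j a, measurable [set w | Apair j w = a].
Hypothesis hAsize : forall j w, #|(Apair j w).1| = n./2 /\ #|(Apair j w).2| = n./2.
Hypothesis hAdisj : forall j w, fintype.disjoint (mem (Apair j w).1) (mem (Apair j w).2).
Hypothesis hAZ : forall (D : set ('I_n -> T)) (F : set ('I_B -> {set 'I_n} * {set 'I_n})),
     prod_measurable D ->
     P ([set w | D (fun i : 'I_n => Z i w)] `&` [set w | F (fun j => Apair j w)])
       = (P [set w | D (fun i : 'I_n => Z i w)]
          * P [set w | F (fun j => Apair j w)])%E.
Variable k : 'I_p.

Definition Xb (b : bool) m' : set ('I_m' -> T) := [set f | (k \in S m' f) = b].

Lemma Xb_meas b m' : prod_measurable (Xb b m').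
Proof.
case: b; first exact: hS.
rewrite (_ : Xb false m' = setT `\` [set f | k \in S m' f]).
  exact: sigma_algebraCD (hS m' k).
apply/seteqP; split=> f /=; first by move=> ->.
by move=> [_ /negP/negbTE].
Qed.

Definition Eb b (a : {set 'I_n}) : set Omega := [set w | (k \in S_hat S Z a w) = b].

Definition pin b : \bar R :=
  P [set w | (k \in S n./2 (fun i : 'I_n./2 => Z i w)) = b].

Lemma Eb_ev b a : Eb b a = @ev #|a| enum_val (Xb b #|a|).
Proof. reflexivity. Qed.

Lemma Eb_meas b a : measurable (Eb b a).
Proof. rewrite Eb_ev; apply: ev_meas; apply: prod_sub_rects; exact: Xb_meas. Qed.

Lemma Eb_prob b (a : {set 'I_n}) : #|a| = n./2 -> P (Eb b a) = pin b.
Proof.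
move=> ha.
have le : (#|a| <= n)%N by have := max_card (mem a); rewrite card_ord.
have winj : injective (fun j : 'I_#|a| => widen_ord le j).
  by move=> x y /(congr1 val) /= /val_inj.
rewrite Eb_ev (@L_eqdist _ _ _ (@enum_val_inj _ a) winj); last first.
  apply: prod_sub_rects; exact: Xb_meas.
change (P [set w | (k \in S #|a| (fun i : 'I_#|a| => Z i w)) = b] = pin b).
rewrite /pin; move: (#|a|) ha => m0 ha; subst m0; reflexivity.
Qed.

Lemma pair_indep b (a1 a2 : {set 'I_n}) : #|a1| = n./2 -> #|a2| = n./2 -> fintype.disjoint (mem a1) (mem a2) ->
  P (Eb b a1 `&` Eb b a2) = (pin b * pin b)%E.
Proof.
move=> h1 h2 hd.
have i1 := @enum_val_inj _ (pred_of_set a1).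
have i2 := @enum_val_inj _ (pred_of_set a2).
rewrite !Eb_ev (@L_indep _ _ _ _ i1 i2).
- by rewrite -!Eb_ev !Eb_prob.
- move=> x y; apply/eqP => e.
  have hx := enum_valP x; have hy := enum_valP y.
  by move: (disjointFr hd hx); rewrite e hy.
- apply: prod_sub_rects; exact: Xb_meas.
- apply: prod_sub_rects; exact: Xb_meas.
Qed.

Definition Aset (j : 'I_B) (a : {set 'I_n} * {set 'I_n}) : set Omega :=
  [set w | Apair j w = a].

Lemma Aset_triv j : trivIset setT (Aset j).
Proof.
apply/trivIsetP => a1 a2 _ _ neq; apply/seteqP; split=> // w [/= e1 e2].
by move/eqP: neq; rewrite -e1 -e2.
Qed.

Lemma term_eq b j (a : {set 'I_n} * {set 'I_n}) :
  P (Aset j a `&` (Eb b a.1 `&` Eb b a.2)) = ((pin b * pin b) * P (Aset j a))%E.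
Proof.
have hD : prod_measurable [set z : 'I_n -> T |
    Xb b #|a.1| (fun i => z (enum_val i)) /\ Xb b #|a.2| (fun i => z (enum_val i))].
  have m1 := @reidx_meas _ (fun i : 'I_#|a.1| => enum_val i) _ (Xb_meas b #|a.1|).
  have m2 := @reidx_meas _ (fun i : 'I_#|a.2| => enum_val i) _ (Xb_meas b #|a.2|).
  have h := @measurableI _ (g_sigma_algebraType (@cylinders 'I_n d T)) _ _ m1 m2.
  exact: h.
have e : P ((Eb b a.1 `&` Eb b a.2) `&` Aset j a) =
   (P (Eb b a.1 `&` Eb b a.2) * P (Aset j a))%E :=
  @hAZ _ [set G : 'I_B -> {set 'I_n} * {set 'I_n} | G j = a] hD.
rewrite setIC e.
case: (boolP [&& #|a.1| == n./2, #|a.2| == n./2 & fintype.disjoint (mem a.1) (mem a.2)]).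
  by case/and3P => /eqP h1 /eqP h2 hd; rewrite pair_indep // muleC.
move=> hinv.
have -> : Aset j a = set0.
  apply/seteqP; split=> // w /= ew; move/negP: hinv; apply.
  have [s1 s2] := hAsize j w; have hd := hAdisj j w.
  by rewrite ew in s1 s2 hd; rewrite s1 s2 !eqxx hd.
by rewrite measure0 !mule0.
Qed.

Lemma Wprob b j :
  P [set w | Eb b (Apair j w).1 w /\ Eb b (Apair j w).2 w] = (pin b * pin b)%E.
Proof.
have decomp : [set w | Eb b (Apair j w).1 w /\ Eb b (Apair j w).2 w] =
    \bigcup_(a in [set: {set 'I_n} * {set 'I_n}]) (Aset j a `&` (Eb b a.1 `&` Eb b a.2)).
  apply/seteqP; split=> w /=.
    by move=> [h1 h2]; exists (Apair j w).
  move=> [a _ [ew [h1 h2]]]; rewrite /Aset /= in ew.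
  by rewrite ew.
rewrite decomp measure_fin_bigcup; last 3 first.
- exact: finite_finset.
- apply/trivIsetP => a1 a2 _ _ neq.
  move/trivIsetP: (Aset_triv j) => /(_ a1 a2 I I neq) h.
  apply/seteqP; split=> // w [[x1 _] [x2 _]].
  have : (Aset j a1 `&` Aset j a2) w by split.
  by rewrite h.
- move=> a _; apply: measurableI; first exact: hAmeas.
  apply: measurableI; exact: Eb_meas.
transitivity (\sum_(a \in [set: {set 'I_n} * {set 'I_n}]) ((pin b * pin b) * P (Aset j a)))%E.
  by apply: eq_fsbigr => a _; exact: term_eq.
rewrite fsbig_finite //= -ge0_sume_distrr; last by move=> a _; exact: measure_ge0.
have e3 : P (\bigcup_(a in [set: {set 'I_n} * {set 'I_n}]) Aset j a) =
    (\sum_(a \in [set: {set 'I_n} * {set 'I_n}]) P (Aset j a))%E.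
  apply: measure_fin_bigcup; first exact: finite_finset.
    exact: Aset_triv.
  by move=> a _; exact: hAmeas.
have eU : \bigcup_(a in [set: {set 'I_n} * {set 'I_n}]) Aset j a = setT.
  by apply/seteqP; split=> // w _; exists (Apair j w).
rewrite eU probability_setT fsbig_finite /= in e3; last exact: finite_finset.
by rewrite -e3 mule1.
Qed.

Definition Wb b j : set Omega := [set w | Eb b (Apair j w).1 w /\ Eb b (Apair j w).2 w].

Lemma ind_W b j w : \1_(Wb b j) w =
  (nat_of_bool (((k \in S_hat S Z (Apair j w).1 w) == b) &&
                ((k \in S_hat S Z (Apair j w).2 w) == b)))%:R :> R.
Proof.
rewrite indicE; case: (boolP (w \in Wb b j)) => h.
  by have [h1 h2] := set_mem h; rewrite /Eb /= in h1 h2; rewrite h1 h2 !eqxx.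
suff -> : ((k \in S_hat S Z (Apair j w).1 w) == b) &&
          ((k \in S_hat S Z (Apair j w).2 w) == b) = false by [].
apply/negbTE; apply/negP => /andP [/eqP h1 /eqP h2].
by move/negP: h; apply; apply/mem_set; split.
Qed.

Lemma tw1 (x y : bool) :
  (nat_of_bool x)%:R + (nat_of_bool y)%:R <= 1 + (nat_of_bool ((x == true) && (y == true)))%:R :> R.
Proof. by case: x; case: y => /=; rewrite ?mulr1n ?mulr0n; lra. Qed.

Lemma tw2 (x y : bool) :
  1 <= (nat_of_bool x)%:R + (nat_of_bool y)%:R + (nat_of_bool ((x == false) && (y == false)))%:R :> R.
Proof. by case: x; case: y => /=; rewrite ?mulr1n ?mulr0n; lra. Qed.

Hypothesis hB : (1 <= B)%N.

Lemma sum1 : \sum_(j < B) (1 : R) = B%:R.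
Proof. by rewrite sumr_const card_ord. Qed.

Lemma pw1 (tau : R) w : k \in S_cpss S Z Apair tau w ->
  (2 * tau - 1) * B%:R <= \sum_(j < B) \1_(Wb true j) w.
Proof.
rewrite inE /Pi_hat => h.
have B0 : 0 < B%:R :> R by rewrite ltr0n.
have h' : 2 * B%:R * tau <= \sum_(j < B)
   ((nat_of_bool (k \in S_hat S Z (Apair j w).1 w))%:R +
    (nat_of_bool (k \in S_hat S Z (Apair j w).2 w))%:R).
  by rewrite -ler_pdivlMl // mulr_gt0.
have key : \sum_(j < B)
   ((nat_of_bool (k \in S_hat S Z (Apair j w).1 w))%:R +
    (nat_of_bool (k \in S_hat S Z (Apair j w).2 w))%:R) <=
   \sum_(j < B) (1 + \1_(Wb true j) w :> R).
  by apply: ler_sum => j _; rewrite ind_W; exact: tw1.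
rewrite [X in _ <= X]big_split /= sum1 in key; lra.
Qed.

Lemma pw2 (tau : R) w : k \notin S_cpss S Z Apair tau w ->
  (1 - 2 * tau) * B%:R <= \sum_(j < B) \1_(Wb false j) w.
Proof.
rewrite inE -ltNge /Pi_hat => h.
have B0 : 0 < B%:R :> R by rewrite ltr0n.
have h' : \sum_(j < B)
   ((nat_of_bool (k \in S_hat S Z (Apair j w).1 w))%:R +
    (nat_of_bool (k \in S_hat S Z (Apair j w).2 w))%:R) < 2 * B%:R * tau.
  by rewrite -ltr_pdivrMl // mulr_gt0.
have key : \sum_(j < B) (1 : R) <= \sum_(j < B)
   (((nat_of_bool (k \in S_hat S Z (Apair j w).1 w))%:R +
    (nat_of_bool (k \in S_hat S Z (Apair j w).2 w))%:R) + \1_(Wb false j) w).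
  by apply: ler_sum => j _; rewrite ind_W; exact: tw2.
rewrite [X in _ <= X]big_split /= sum1 in key; lra.
Qed.

Definition Ex (f : {set 'I_n} * {set 'I_n} -> {set 'I_n}) j : set Omega :=
  [set w | k \in S_hat S Z (f (Apair j w)) w].

Lemma Ex_meas f j : measurable (Ex f j).
Proof.
have -> : Ex f j = \bigcup_(a in [set: {set 'I_n} * {set 'I_n}]) (Aset j a `&` Eb true (f a)).
  apply/seteqP; split=> w /=.
    by move=> h; exists (Apair j w).
  by move=> [a _ [ew h]]; rewrite /Aset /= in ew; rewrite /Eb /= -ew in h.
apply: fin_bigcup_measurable; first exact: finite_finset.
move=> a _; apply: measurableI; [exact: hAmeas | exact: Eb_meas].
Qed.

Lemma ind_Ex f j w :
  (nat_of_bool (k \in S_hat S Z (f (Apair j w)) w))%:R = \1_(Ex f j) w :> R.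
Proof.
rewrite indicE; case: (boolP (w \in Ex f j)) => h.
  by have h1 := set_mem h; rewrite /Ex /= in h1; rewrite h1.
suff -> : (k \in S_hat S Z (f (Apair j w)) w) = false by [].
by apply/negbTE/negP => h1; move/negP: h; apply; exact/mem_set.
Qed.

Lemma Cmeas (tau : R) : measurable [set w | k \in S_cpss S Z Apair tau w].
Proof.
pose f := fun w => (2 * B%:R)^-1 * \sum_(j < B) (\1_(Ex fst j) w + \1_(Ex snd j) w) : R.
have mf : measurable_fun setT f.
  apply: measurable_funM; first exact: measurable_cst.
  apply: measurable_sum => j.
  apply: measurable_funD; apply: measurable_indic; exact: Ex_meas.
have eqPi : forall w, Pi_hat R S Z Apair k w = f w.
  move=> w; rewrite /Pi_hat /f; congr (_ * _); apply: eq_bigr => j _.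
  by rewrite (ind_Ex fst) (ind_Ex snd).
have e : [set w | k \in S_cpss S Z Apair tau w] = f @^-1` `[tau, +oo[.
  apply/seteqP; split=> w /=.
    rewrite inE /= ?in_itv /= ?andbT eqPi; exact: id.
  rewrite in_itv /= andbT => h; rewrite inE /= eqPi; exact: h.
rewrite e; have := mf measurableT _ (measurable_itv `[tau, +oo[).
by rewrite setTI.
Qed.

Lemma half_le : (n./2 <= n)%N.
Proof. by rewrite -divn2 leq_div. Qed.

Lemma pin_meas : measurable [set w | k \in S n./2 (fun i : 'I_n./2 => Z i w)].
Proof.
have := @ev_meas _ (fun i : 'I_n./2 => widen_ord half_le i) _
  (@prod_sub_rects _ _ (Xb_meas true n./2)).
exact.
Qed.

Lemma pin_true : pin true = (p_km P S Z k n./2)%:E.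
Proof. rewrite /pin /p_km; exact: (PE pin_meas). Qed.

Lemma pin_false : pin false = (1 - p_km P S Z k n./2)%:E.
Proof.
rewrite /pin (_ : [set w | (k \in S n./2 (fun i : 'I_n./2 => Z i w)) = false] =
   ~` [set w | k \in S n./2 (fun i : 'I_n./2 => Z i w)]).
  rewrite probability_setC; last exact: pin_meas.
  rewrite -[P _]/(pin true) pin_true -EFinB; reflexivity.
apply/seteqP; split=> w /=; first by move=> ->.
by move/negP/negbTE.
Qed.

Lemma Wb_meas b j : measurable (Wb b j).
Proof.
have -> : Wb b j =
    \bigcup_(a in [set: {set 'I_n} * {set 'I_n}]) (Aset j a `&` (Eb b a.1 `&` Eb b a.2)).
  apply/seteqP; split=> w /=.
    by move=> [h1 h2]; exists (Apair j w).
  move=> [a _ [ew [h1 h2]]]; rewrite /Aset /= in ew.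
  by rewrite /Wb /= ew.
apply: fin_bigcup_measurable; first exact: finite_finset.
move=> a _; apply: measurableI; first exact: hAmeas.
apply: measurableI; exact: Eb_meas.
Qed.

Lemma sumW b (r : R) : pin b = r%:E ->
  \big[adde/0%E]_(j < B) P (Wb b j) = (B%:R * r ^+ 2)%:E.
Proof.
move=> hr.
rewrite (eq_bigr (fun _ => (r * r)%:E)); last first.
  by move=> j _; rewrite -[P _]/(P [set w | Eb b (Apair j w).1 w /\ Eb b (Apair j w).2 w]) Wprob hr.
rewrite sumEFin sumr_const card_ord expr2 mulr_natl; reflexivity.
Qed.

Lemma part1 (tau : R) : 1/2 < tau <= 1 ->
  (P [set w | k \in S_cpss S Z Apair tau w]
     <= ((2 * tau - 1)^-1 * (p_km P S Z k n./2) ^+ 2)%:E)%E.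
Proof.
move=> /andP [t1 t2].
set q := p_km P S Z k n./2.
have B0 : 0 < B%:R :> R by rewrite ltr0n.
have t0 : 0 < 2 * tau - 1 by lra.
have c0 : 0 <= (2 * tau - 1) * B%:R by rewrite mulr_ge0 // ?ltW.
have := @markov_fin R d0 Omega P B (Wb true) _ ((2 * tau - 1) * B%:R)
   (Wb_meas true) (Cmeas tau) c0 (@pw1 tau).
rewrite (@sumW true _ pin_true) (PE (Cmeas tau)) -EFinM !lee_fin => h.
rewrite ler_pdivlMl // -(ler_pM2l B0) mulrA (mulrC B%:R) -mulrA.
by rewrite mulrA.
Qed.

Lemma part2 (tau : R) : 0 <= tau < 1/2 ->
  (P [set w | k \notin S_cpss S Z Apair tau w]
     <= ((1 - 2 * tau)^-1 * (1 - p_km P S Z k n./2) ^+ 2)%:E)%E.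
Proof.
move=> /andP [t1 t2].
have B0 : 0 < B%:R :> R by rewrite ltr0n.
have t0 : 0 < 1 - 2 * tau by lra.
have c0 : 0 <= (1 - 2 * tau) * B%:R by rewrite mulr_ge0 // ?ltW.
have mC : measurable [set w | k \notin S_cpss S Z Apair tau w].
  rewrite (_ : [set w | k \notin S_cpss S Z Apair tau w] =
               ~` [set w | k \in S_cpss S Z Apair tau w]).
    exact: measurableC (Cmeas tau).
  by apply/seteqP; split=> w /= /negP.
have := @markov_fin R d0 Omega P B (Wb false) _ ((1 - 2 * tau) * B%:R)
   (Wb_meas false) mC c0 (@pw2 tau).
rewrite (@sumW false _ pin_false) (PE mC) -EFinM !lee_fin => h.
rewrite ler_pdivlMl // -(ler_pM2l B0) mulrA (mulrC B%:R) -mulrA.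
by rewrite mulrA.
Qed.

End Main.

Theorem lemma1 (R : realType)
  (d0 : measure_display) (Omega : measurableType d0) (P : probability Omega R)
  (d : measure_display) (T : measurableType d)
  (n p B : nat) (hn : (2 <= n)%N) (hp : (1 <= p)%N) (hB : (1 <= B)%N)
  (S : selection T p)
  (* the selection procedure is measurable w.r.t. the product sigma-algebra *)
  (hS : forall (m : nat) (k : 'I_p), prod_measurable [set f | k \in S m f])
  (* data Z_1, ..., Z_n (0-based indices 0..n-1) *)
  (Z : nat -> Omega -> T)
  (hZmeas : forall i : 'I_n, measurable_fun setT (Z i))
  (* Z_1, ..., Z_n mutually independent *)
  (hZind : forall Bs : 'I_n -> set T, (forall i, measurable (Bs i)) ->
     P (\bigcap_(i in [set: 'I_n]) (Z i @^-1` Bs i))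
       = (\prod_(i < n) P (Z i @^-1` Bs i))%E)
  (* ... and identically distributed *)
  (hZid : forall (i j : 'I_n) (Bs : set T), measurable Bs ->
     P (Z i @^-1` Bs) = P (Z j @^-1` Bs))
  (* random pairs (A_{2j-1}, A_{2j}), j = 1..B *)
  (Apair : 'I_B -> Omega -> {set 'I_n} * {set 'I_n})
  (hAmeas : forall j a, measurable [set w | Apair j w = a])
  (hAsize : forall j w, #|(Apair j w).1| = n./2 /\ #|(Apair j w).2| = n./2)
  (hAdisj : forall j w, fintype.disjoint (mem (Apair j w).1) (mem (Apair j w).2))
  (* the pairs are mutually independent *)
  (hAind : forall F : 'I_B -> set ({set 'I_n} * {set 'I_n}),
     P (\bigcap_(j in [set: 'I_B]) (Apair j @^-1` F j))
       = (\prod_(j < B) P (Apair j @^-1` F j))%E)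
  (* the pairs are independent of the data *)
  (hAZ : forall (D : set ('I_n -> T)) (F : set ('I_B -> {set 'I_n} * {set 'I_n})),
     prod_measurable D ->
     P ([set w | D (fun i : 'I_n => Z i w)] `&` [set w | F (fun j => Apair j w)])
       = (P [set w | D (fun i : 'I_n => Z i w)]
          * P [set w | F (fun j => Apair j w)])%E)
  (k : 'I_p) :
  (forall tau : R, 1/2 < tau <= 1 ->
     (P [set w | k \in S_cpss S Z Apair tau w]
       <= ((2 * tau - 1)^-1 * (p_km P S Z k n./2) ^+ 2)%:E)%E) /\
  (forall tau : R, 0 <= tau < 1/2 ->
     (P [set w | k \notin S_cpss S Z Apair tau w]
       <= ((1 - 2 * tau)^-1 * (1 - p_km P S Z k n./2) ^+ 2)%:E)%E).
Proof.
split.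
- move=> tau htau.
  exact: (@part1 _ _ _ _ _ _ _ _ hZmeas hZind hZid _ _ _ hS _ hAmeas hAsize hAdisj hAZ k hB tau htau).
- move=> tau htau.
  exact: (@part2 _ _ _ _ _ _ _ _ hZmeas hZind hZid _ _ _ hS _ hAmeas hAsize hAdisj hAZ k hB tau htau).
Qed.
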